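(* Let $1<\beta<\sqrt{3/2}$ and let $t_0>0$ be the unique number with $\hat\sigma(t_0,\beta)=\sqrt{\beta^2-1}$. Let $k_0=\min\{k\in\mathbb{N}:\ t_0\le 2k+2\}$. Then $l(2k_0+2,\beta)\le l(t_0,\beta)$, and the strict inequality holds if $t_0\ne 2k_0+2$.
   Context: $\mathbb{N}=\{0,1,2,\dots\}$. For $t\ge 0$ let $q(t)=\lfloor t+1\rfloor/2$ if $\lfloor t\rfloor$ is odd and $q(t)=t-\lfloor t\rfloor/2$ if $\lfloor t\rfloor$ is even, and $p(t)=t+1-q(t)$. For $\beta\ge1$ let $\hat\sigma(t,\beta)\in(0,1)$ be the unique solution $\sigma$ of $\frac{p(t)\sigma}{\sqrt{1-\sigma^2}}+\frac{q(t)\sigma}{\sqrt{\beta^2-\sigma^2}}=1$ (the map $t\mapsto\hat\sigma(t,\beta)$ is strictly decreasing from $1/\sqrt2$ to $0$). The normalized length is $l(t,\beta)=\frac{p(t)}{\sqrt{1-\hat\sigma^2}}+\frac{\beta^2q(t)}{\sqrt{\beta^2-\hat\sigma^2}}-t-\sqrt2$, $\hat\sigma=\hat\sigma(t,\beta)$. *)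

(* Defs.v *)
From Stdlib Require Import Reals Lra ZArith ClassicalEpsilon.
Open Scope R_scope.

(* floor of a real: Int_part r = up r - 1 is the floor. *)
Definition floorR (t : R) : Z := Int_part t.

Definition qfun (t : R) : R :=
  if Z.odd (floorR t) then IZR (floorR (t + 1)) / 2
  else t - IZR (floorR t) / 2.

Definition pfun (t : R) : R := t + 1 - qfun t.

Definition sigma_eq (t beta s : R) : Prop :=
  pfun t * s / sqrt (1 - s ^ 2) + qfun t * s / sqrt (beta ^ 2 - s ^ 2) = 1.

Definition sigma_hat (t beta : R) : R :=
  epsilon (inhabits 0) (fun s => 0 < s < 1 /\ sigma_eq t beta s).

Definition lfun (t beta : R) : R :=
  let s := sigma_hat t beta in
  pfun t / sqrt (1 - s ^ 2) + beta ^ 2 * qfun t / sqrt (beta ^ 2 - s ^ 2)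
  - t - sqrt 2.

(* Main.v *)
Require Import Defs.
From Stdlib Require Import Reals Lra Psatz ZArith Ranalysis5 ClassicalEpsilon.
Open Scope R_scope.
Lemma cont_sq (c a : R) : 0 < c - a^2 -> continuity_pt (fun s => sqrt (c - s^2)) a.
Proof.
  intro H.
  apply (continuity_pt_comp (fun s => c - s^2) sqrt).
  - apply derivable_continuous_pt. reg.
  - apply continuity_pt_sqrt. lra.
Qed.
Lemma exist_sol (P Q b : R) : 1 <= P -> 0 < Q -> 1 <= b ->
  exists s, 0 < s < 1 /\ P * s / sqrt (1 - s ^ 2) + Q * s / sqrt (b ^ 2 - s ^ 2) = 1.
Proof.
  intros HP HQ Hb.
  set (f := fun s => P*s*sqrt(b^2-s^2) + Q*s*sqrt(1-s^2) - sqrt(1-s^2)*sqrt(b^2-s^2)).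
  assert (Hc : forall a, 0 <= a <= 4/5 -> continuity_pt f a).
  { intros a Ha. unfold f.
    assert (h1 := cont_sq 1 a ltac:(nra)). assert (h2 := cont_sq (b^2) a ltac:(nra)).
    apply continuity_pt_minus; [apply continuity_pt_plus|apply continuity_pt_mult; auto];
    apply continuity_pt_mult; auto; apply derivable_continuous_pt; reg. }
  assert (Hb2 : 0 < sqrt (b^2 - 0^2)). { apply sqrt_lt_R0. nra. }
  assert (H1 : 0 < sqrt (1 - 0^2)). { apply sqrt_lt_R0. nra. }
  assert (Hf0 : f 0 < 0). { unfold f. nra. }
  assert (E : sqrt (1 - (4/5)^2) = 3/5).
  { replace (1 - (4/5)^2) with ((3/5)*(3/5)) by field. apply sqrt_square. lra. }
  assert (Hb3 : 0 < sqrt (b^2 - (4/5)^2)). { apply sqrt_lt_R0. nra. }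
  assert (Hf1 : 0 < f (4/5)). { unfold f. rewrite E. nra. }
  destruct (IVT_interv f 0 (4/5) Hc ltac:(lra) Hf0 Hf1) as [z [Hz Hfz]].
  assert (z <> 0). { intro; subst. lra. }
  assert (HA : 0 < sqrt (1 - z^2)). { apply sqrt_lt_R0. nra. }
  assert (HB : 0 < sqrt (b^2 - z^2)). { apply sqrt_lt_R0. nra. }
  exists z. split; [lra|]. unfold f in Hfz.
  set (A := sqrt (1 - z^2)) in *. set (B := sqrt (b^2 - z^2)) in *.
  assert (Hk : P*z*B + Q*z*A = A*B) by lra.
  replace (P * z / A + Q * z / B) with ((P*z*B + Q*z*A)/(A*B)) by (field; lra).
  rewrite Hk. field. lra.
Qed.
Lemma floor_eq (r : R) (z : Z) : IZR z <= r < IZR z + 1 -> floorR r = z.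
Proof.
  intros [H1 H2]. unfold floorR, Int_part.
  assert (z + 1 = up r)%Z. { apply tech_up; rewrite plus_IZR; simpl; lra. }
  lia.
Qed.
Lemma pq_T (k : nat) : qfun (2 * INR k + 2) = INR k + 1 /\ pfun (2 * INR k + 2) = INR k + 2.
Proof.
  assert (F : floorR (2 * INR k + 2) = (2 * (Z.of_nat k + 1))%Z).
  { apply floor_eq. rewrite mult_IZR, plus_IZR, <- INR_IZR_INZ. simpl. lra. }
  assert (Q : qfun (2 * INR k + 2) = INR k + 1).
  { unfold qfun. rewrite F. rewrite Z.odd_mul. cbn [Z.odd orb].
    rewrite mult_IZR, plus_IZR, <- INR_IZR_INZ. simpl. lra. }
  split; [exact Q|]. unfold pfun. rewrite Q. lra.
Qed.
Lemma pq_1 (k : nat) (t : R) : 2 * INR k < t < 2 * INR k + 1 ->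
  qfun t = t - INR k /\ pfun t = INR k + 1.
Proof.
  intro H.
  assert (F : floorR t = (2 * Z.of_nat k)%Z).
  { apply floor_eq. rewrite mult_IZR, <- INR_IZR_INZ. simpl. lra. }
  assert (Q : qfun t = t - INR k).
  { unfold qfun. rewrite F. rewrite Z.odd_mul. cbn [Z.odd orb].
    rewrite mult_IZR, <- INR_IZR_INZ. simpl. lra. }
  split; [exact Q|]. unfold pfun. rewrite Q. lra.
Qed.
Lemma pq_2 (k : nat) (t : R) : 2 * INR k + 1 <= t < 2 * INR k + 2 ->
  qfun t = INR k + 1 /\ pfun t = t - INR k.
Proof.
  intro H.
  assert (F : floorR t = (1 + 2 * Z.of_nat k)%Z).
  { apply floor_eq. rewrite plus_IZR, mult_IZR, <- INR_IZR_INZ. simpl. lra. }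
  assert (F2 : floorR (t+1) = (2 * (Z.of_nat k + 1))%Z).
  { apply floor_eq. rewrite mult_IZR, plus_IZR, <- INR_IZR_INZ. simpl. lra. }
  assert (Q : qfun t = INR k + 1).
  { unfold qfun. rewrite F, Z.odd_add_mul_2. cbn [Z.odd]. rewrite F2.
    rewrite mult_IZR, plus_IZR, <- INR_IZR_INZ. simpl. lra. }
  split; [exact Q|]. unfold pfun. rewrite Q. lra.
Qed.
Lemma tangent (c a s : R) : 0 <= a -> a^2 < c -> 0 <= s -> s^2 <= c ->
  sqrt (c - s^2) * sqrt (c - a^2) <= c - a*s.
Proof.
  intros Ha Hac Hs Hsc.
  assert (Hp : 0 <= c - a*s).
  { assert (a*s*(a*s) <= c*c) by nra. nra. }
  rewrite <- sqrt_mult_alt by lra.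
  rewrite <- (sqrt_square (c - a*s)) by lra.
  apply sqrt_le_1_alt.
  assert (E : (c - a*s)*(c-a*s) - (c - s^2)*(c - a^2) = c*((a-s)*(a-s))) by ring.
  assert (0 <= c*((a-s)*(a-s))) by (apply Rmult_le_pos; [nra| apply Rle_0_sqr]). lra.
Qed.
Lemma key_lower (P Q b s sg : R) : 0 <= P -> 0 <= Q -> 1 <= b -> 0 < s < 1 ->
  P * s / sqrt (1 - s ^ 2) + Q * s / sqrt (b ^ 2 - s ^ 2) = 1 ->
  0 <= sg <= 1 ->
  P * sqrt (1 - sg^2) + Q * sqrt (b^2 - sg^2) + sg <=
  P / sqrt (1 - s ^ 2) + b ^ 2 * Q / sqrt (b ^ 2 - s ^ 2).
Proof.
  intros HP HQ Hb Hs He Hsg.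
  assert (HA : 0 < sqrt (1 - s^2)) by (apply sqrt_lt_R0; nra).
  assert (HB : 0 < sqrt (b^2 - s^2)) by (apply sqrt_lt_R0; nra).
  assert (T1 := tangent 1 s sg ltac:(lra) ltac:(nra) ltac:(lra) ltac:(nra)).
  assert (T2 := tangent (b^2) s sg ltac:(lra) ltac:(nra) ltac:(lra) ltac:(nra)).
  set (A := sqrt (1 - s^2)) in *. set (B := sqrt (b^2 - s^2)) in *.
  set (X := sqrt (1 - sg^2)) in *. set (Y := sqrt (b^2 - sg^2)) in *.
  assert (E1 : X <= (1 - s*sg)/A) by (apply (Rmult_le_reg_r A); [lra| field_simplify; lra]).
  assert (E2 : Y <= (b^2 - s*sg)/B) by (apply (Rmult_le_reg_r B); [lra| field_simplify; lra]).
  assert (E3 : P * X + Q * Y + sg <= P*((1 - s*sg)/A) + Q*((b^2 - s*sg)/B) + sg) by nra.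
  assert (E4 : P*((1 - s*sg)/A) + Q*((b^2 - s*sg)/B) + sg = P / A + b^2*Q/B - sg*(P*s/A + Q*s/B - 1)) by (field; lra).
  rewrite He in E4. lra.
Qed.
Lemma key_id (P Q b s : R) : 1 <= b -> 0 < s < 1 ->
  P * s / sqrt (1 - s ^ 2) + Q * s / sqrt (b ^ 2 - s ^ 2) = 1 ->
  P / sqrt (1 - s ^ 2) + b ^ 2 * Q / sqrt (b ^ 2 - s ^ 2) =
  P * sqrt (1 - s^2) + Q * sqrt (b^2 - s^2) + s.
Proof.
  intros Hb Hs He.
  assert (HA : 0 < sqrt (1 - s^2)) by (apply sqrt_lt_R0; nra).
  assert (HB : 0 < sqrt (b^2 - s^2)) by (apply sqrt_lt_R0; nra).
  assert (SA : sqrt (1 - s^2) * sqrt (1 - s^2) = 1 - s^2) by (apply sqrt_sqrt; nra).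
  assert (SB : sqrt (b^2 - s^2) * sqrt (b^2 - s^2) = b^2 - s^2) by (apply sqrt_sqrt; nra).
  set (A := sqrt (1 - s^2)) in *. set (B := sqrt (b^2 - s^2)) in *.
  assert (E : P / A + b^2*Q/B - (P*A + Q*B + s) = s*(P*s/A + Q*s/B - 1)).
  { assert (P / A = P * A + P * s^2 / A). { assert (H0 : P / A - (P*A + P*s^2/A) = P*(1 - s^2 - A*A)/A) by (field; lra).
      rewrite SA in H0. replace (1 - s^2 - (1 - s^2)) with 0 in H0 by ring. unfold Rdiv in H0. lra. }
    assert (b^2*Q / B = Q * B + Q * s^2 / B). { assert (H0 : b^2*Q / B - (Q*B + Q*s^2/B) = Q*(b^2 - s^2 - B*B)/B) by (field; lra).
      rewrite SB in H0. replace (b^2 - s^2 - (b^2 - s^2)) with 0 in H0 by ring. unfold Rdiv in H0. lra. }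
    assert (s*(P*s/A + Q*s/B - 1) = P*s^2/A + Q*s^2/B - s) by (field; lra).
    lra. }
  rewrite He in E. lra.
Qed.
Lemma D2 (n x a q : R) : 2 <= n -> 0 < x -> 0 < a -> a*a = 1 - x*x ->
  n*x + q*x*a = a -> n-1 < q -> q < n ->
  n*x^2/2 + 1/(2*(2*n+1)) < n*(a-1) + x.
Proof.
  intros Hn Hx Ha Haa He Hq1 Hq2.
  assert (Ha1 : a <= 1) by nra.
  assert (H1 : x*(2*n-1) < 1).
  { assert (0 < (q - (n-1))*(x*a)) by (apply Rmult_lt_0_compat; nra).
    assert (x*(n+(n-1)*a) < a) by nra.
    assert (0 <= (1-a)*(x*n)) by (apply Rmult_le_pos; nra). nra. }
  assert (Hx3 : x <= 1/3).
  { apply (Rmult_le_reg_r 3); [lra|]. field_simplify. nra. }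
  set (y := x*x).
  assert (Hy : y <= 1/9) by (unfold y; nra).
  assert (Hy0 : 0 <= y) by (unfold y; nra).
  assert (H2 : 1 - y/2 - y*y/4 <= a).
  { assert (0 <= 1 - y/2 - y*y/4) by nra.
    assert ((1 - y/2 - y*y/4)*(1 - y/2 - y*y/4) <= a*a) by (rewrite Haa; fold y;
      assert (0 <= y) by (unfold y; nra);
      assert (0 <= (y*y)*(1/4 - y/4 - y*y/16)) by (apply Rmult_le_pos; nra);
      nra).
    nra. }
  assert (H3 : a <= x*n*(1+a)).
  { assert (0 < (n-q)*(x*a)) by (apply Rmult_lt_0_compat; nra). nra. }
  set (u := 2*n*x).
  assert (Hu1 : u - 1 < 1/(2*n-1)).
  { unfold u. apply (Rmult_lt_reg_r (2*n-1)); [lra|]. field_simplify; nra. }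
  assert (Hu2 : 1 - u <= y).
  { unfold u. assert (2*a <= u*(1+a)) by (unfold u; nra).
    assert (1 - a <= y) by nra. nra. }
  assert (Hy2 : y <= 1/(2*n-1) * (1/(2*n-1))).
  { unfold y. assert (x <= 1/(2*n-1)).
    { apply (Rmult_le_reg_r (2*n-1)); [lra|]. field_simplify; nra. }
    assert (0 < 1/(2*n-1)) by (apply Rdiv_lt_0_compat; lra). nra. }
  set (e := 1/(2*n-1)).
  fold e in Hu1. fold e in Hy2.
  assert (He0 : 0 < e) by (apply Rdiv_lt_0_compat; lra).
  assert (He1 : e*(2*n-1) = 1) by (unfold e; field; lra).
  assert (Hsq : (1-u)*(1-u) <= e*e).
  { assert (e <= 1) by nra. assert (0 <= e*(1-e)) by (apply Rmult_le_pos; lra). assert (y <= e) by nra.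
    assert (0 <= (e - (1-u))*(e + (1-u))) by (apply Rmult_le_pos; lra). nra. }
  assert (Hfin : (2*n+1)*(e*e + n*n*(e*e)*(e*e)) < 1).
  { assert (E4: (2*n-1)*(2*n-1)*(2*n-1)*(2*n-1)*(e*e*e*e) = 1).
    { replace ((2*n-1)*(2*n-1)*(2*n-1)*(2*n-1)*(e*e*e*e)) with ((e*(2*n-1))^4) by ring.
      rewrite He1. ring. }
    assert (P : (2*n+1)*((2*n-1)*(2*n-1) + n*n) < (2*n-1)*(2*n-1)*(2*n-1)*(2*n-1)).
    { set (m := n - 2). assert (Hm : 0 <= m) by (unfold m; lra).
      replace n with (m+2) by (unfold m; ring).
      assert (0 <= m*m) by nra. assert (0 <= m*m*m) by nra. assert (0 <= m*m*m*m) by nra.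
      nra. }
    assert (0 < e*e*e*e).
    { assert (0 < e*e) by nra. nra. }
    assert (Ee : e*e = (2*n-1)*(2*n-1)*(e*e*e*e)).
    { replace ((2*n-1)*(2*n-1)*(e*e*e*e)) with ((e*(2*n-1))^2*(e*e)) by ring. rewrite He1. ring. }
    assert (K : (2*n+1)*(e*e + n*n*(e*e)*(e*e)) - (2*n+1)*((2*n-1)*(2*n-1)+n*n)*(e*e*e*e) = (2*n+1)*(e*e - (2*n-1)*(2*n-1)*(e*e*e*e))) by ring.
    rewrite <- Ee in K. replace (e*e - e*e) with 0 in K by ring. rewrite Rmult_0_r in K.
    assert (K2 : (2*n+1)*((2*n-1)*(2*n-1)+n*n)*(e*e*e*e) < (2*n-1)*(2*n-1)*(2*n-1)*(2*n-1)*(e*e*e*e)) by nra.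
    lra. }
  assert (Hy4 : n*n*(y*y) <= n*n*(e*e)*(e*e)).
  { assert (y*y <= (e*e)*(e*e)) by (assert (0 <= y) by (unfold y; nra); nra). nra. }
  assert (G : 1/(2*n+1) > (1-u)*(1-u) + n*n*(y*y)).
  { apply (Rmult_gt_reg_l (2*n+1)); [lra|]. field_simplify; [|lra]. nra. }
  assert (G2 : x - n*y - n*(y*y)/4 - 1/(2*(2*n+1)) > 0).
  { assert (E : 4*n*(x - n*y - n*(y*y)/4 - 1/(2*(2*n+1))) = 1/(2*n+1) - ((1-u)*(1-u) + n*n*(y*y))).
    { unfold u, y. field. lra. }
    assert (0 < 4*n*(x - n*y - n*(y*y)/4 - 1/(2*(2*n+1)))) by lra. nra. }
  unfold y in *. nra.
Qed.
Lemma D1 (x a b q s : R) : 0 < x -> 0 < a -> 0 < b -> a*a = 1 - x*x -> b*b = 1 + x*x ->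
  x + q*x*a = a -> 0 < q -> q < 1 ->
  b - s^2 - s^2/(2*b) + s < a + x.
Proof.
  intros Hx Ha Hb Haa Hbb He Hq1 Hq2.
  assert (Hxa : x < a) by (assert (0 < q*x*a) by (repeat apply Rmult_lt_0_compat; lra); lra).
  assert (Hx2 : x*x < 1/2) by nra.
  assert (Hxa2 : a <= x*(1+a)) by (assert (0 < (1-q)*(x*a)) by (apply Rmult_lt_0_compat; nra); nra).
  assert (Hx45 : 45/100 <= x).
  { destruct (Rle_or_lt (45/100) x) as [H|H]; [exact H|].
    assert (a*a > 79/100) by nra. assert (a > 88/100) by nra. nra. }
  assert (Hb1 : b <= 5/4) by nra.
  assert (Hb0 : 1 <= b) by nra.
  assert (K1 : b <= x + a - 18/100).
  { assert (Hp : 0 <= x + a - 18/100) by nra.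
    assert (b*b <= (x + a - 18/100)*(x + a - 18/100)).
    { rewrite Hbb. assert (0 <= (x - 45/100)*(a-x)) by (apply Rmult_le_pos; lra). nra. }
    destruct (Rle_or_lt b (x + a - 18/100)) as [H0|H0]; [exact H0|].
    assert ((x + a - 18/100)*(x + a - 18/100) < b*b) by (apply Rmult_le_0_lt_compat; lra). lra. }
  assert (K2 : s - s^2 - s^2/(2*b) <= s - 14/10 * s^2).
  { assert (s^2/(2*b) >= 4/10 * s^2).
    { apply Rle_ge. apply (Rmult_le_reg_r (2*b)); [lra|]. field_simplify; [|lra]. nra. }
    lra. }
  assert (K3 : s - 14/10 * s^2 < 18/100) by (assert (0 <= (s - 5/14)*(s-5/14)) by apply Rle_0_sqr; nra).
  lra.
Qed.
Lemma sqrt_le_of (c d : R) : 0 <= d -> c <= d*d -> sqrt c <= d.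
Proof. intros H1 H2. rewrite <- (sqrt_square d) by lra. apply sqrt_le_1_alt. lra. Qed.

Lemma sh_spec (t b : R) : 1 <= pfun t -> 0 < qfun t -> 1 <= b ->
  0 < sigma_hat t b < 1 /\ sigma_eq t b (sigma_hat t b).
Proof.
  intros HP HQ Hb. unfold sigma_hat. apply epsilon_spec.
  destruct (exist_sol (pfun t) (qfun t) b HP HQ Hb) as [s Hs]. exists s. exact Hs.
Qed.

Lemma lfun_id (t b : R) : 1 <= pfun t -> 0 < qfun t -> 1 <= b ->
  lfun t b = pfun t * sqrt (1 - (sigma_hat t b)^2) + qfun t * sqrt (b^2 - (sigma_hat t b)^2)
    + sigma_hat t b - t - sqrt 2.
Proof.
  intros HP HQ Hb. destruct (sh_spec t b HP HQ Hb) as [Hs He].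
  unfold lfun. unfold sigma_eq in He. rewrite (key_id _ _ _ _ Hb Hs He). ring.
Qed.

Lemma lfun_lower (t b sg : R) : 1 <= pfun t -> 0 < qfun t -> 1 <= b -> 0 <= sg <= 1 ->
  pfun t * sqrt (1 - sg^2) + qfun t * sqrt (b^2 - sg^2) + sg - t - sqrt 2 <= lfun t b.
Proof.
  intros HP HQ Hb Hsg. destruct (sh_spec t b HP HQ Hb) as [Hs He].
  unfold lfun. unfold sigma_eq in He.
  assert (K := key_lower (pfun t) (qfun t) b _ sg ltac:(lra) ltac:(lra) Hb Hs He Hsg).
  cbv zeta. lra.
Qed.

Theorem theorem3p5 (beta t0 : R) (k0 : nat) :
  1 < beta -> beta < sqrt (3 / 2) ->
  0 < t0 -> sigma_hat t0 beta = sqrt (beta ^ 2 - 1) ->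
  (t0 <= 2 * INR k0 + 2 /\ (forall k : nat, t0 <= 2 * INR k + 2 -> (k0 <= k)%nat)) ->
  lfun (2 * INR k0 + 2) beta <= lfun t0 beta /\
  (t0 <> 2 * INR k0 + 2 -> lfun (2 * INR k0 + 2) beta < lfun t0 beta).
Proof.
  intros Hb1 Hb2 Ht0 Hsig [Hk0 Hmin].
  assert (Hk : 0 <= INR k0) by apply pos_INR.
  assert (Hlow : 2 * INR k0 < t0).
  { destruct k0 as [|k].
    - simpl. lra.
    - destruct (Rle_or_lt t0 (2 * INR k + 2)) as [H|H].
      + specialize (Hmin k H). lia.
      + rewrite S_INR. lra. }
  assert (Hbb : beta * beta < 3/2).
  { assert (beta * beta < sqrt (3/2) * sqrt (3/2)) by nra.
    rewrite sqrt_sqrt in H by lra. exact H. }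
  set (T := 2 * INR k0 + 2).
  destruct (pq_T k0) as [QT PT]. fold T in QT, PT.
  assert (HPT : 1 <= pfun T) by lra. assert (HQT : 0 < qfun T) by lra.
  destruct (sh_spec T beta HPT HQT ltac:(lra)) as [Hs1 _].
  assert (LT := lfun_id T beta HPT HQT ltac:(lra)).
  set (s1 := sigma_hat T beta) in *.
  assert (HA1 : sqrt (1 - s1^2) <= 1 - s1^2/2).
  { apply sqrt_le_of; nra. }
  assert (HA1' : sqrt (1 - s1^2) < 1).
  { apply Rlt_le_trans with (sqrt 1); [apply sqrt_lt_1_alt; nra | rewrite sqrt_1; lra]. }
  destruct (Req_dec t0 T) as [Heq|Hne].
  { rewrite Heq. split; [lra|]. intro H; exfalso; apply H; reflexivity. }
  assert (Hlt : t0 < T) by (unfold T in *; lra).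
  enough (lfun T beta < lfun t0 beta) by (split; [lra| intros; exact H]).
  destruct (Rlt_or_le t0 (2 * INR k0 + 1)) as [C1|C2].
  -
    destruct (pq_1 k0 t0 (conj Hlow C1)) as [Q0 P0].
    assert (HP0 : 1 <= pfun t0) by lra. assert (HQ0 : 0 < qfun t0) by lra.
    destruct (sh_spec t0 beta HP0 HQ0 ltac:(lra)) as [Hs0 He0].
    assert (L0 := lfun_id t0 beta HP0 HQ0 ltac:(lra)).
    rewrite Hsig in L0, He0, Hs0.
    set (x := sqrt (beta^2 - 1)) in *.
    assert (Hxx : x * x = beta^2 - 1) by (apply sqrt_sqrt; nra).
    assert (Hx1 : beta^2 - x^2 = 1) by nra.
    rewrite Hx1, sqrt_1 in L0. unfold sigma_eq in He0. rewrite Hx1, sqrt_1 in He0.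
    assert (Haa : sqrt (1 - x^2) * sqrt (1 - x^2) = 1 - x^2) by (apply sqrt_sqrt; nra).
    assert (Ha : 0 < sqrt (1 - x^2)) by (apply sqrt_lt_R0; nra).
    set (a := sqrt (1 - x^2)) in *.
    rewrite P0, Q0 in He0, L0. rewrite PT, QT in LT.
    assert (Heq : (INR k0 + 1) * x + (t0 - INR k0) * x * a = a).
    { assert (E1 : (INR k0 + 1) * x / a = 1 - (t0 - INR k0) * x) by (assert (Z1 : (t0 - INR k0) * x / 1 = (t0 - INR k0) * x) by field; lra).
      assert (E3 : (INR k0+1)*x = ((INR k0 + 1) * x / a) * a) by (field; lra).
      rewrite E1 in E3. rewrite E3. ring. }
    assert (Hx : 0 < x) by (apply sqrt_lt_R0; nra).
    assert (Haa' : a*a = 1 - x*x) by (rewrite Haa; ring).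
    assert (Hs2 : 0 <= s1^2 < 1) by nra.
    destruct k0 as [|k].
    + change (INR 0) with 0 in *.
      assert (Heq' : x + t0*x*a = a) by (rewrite <- Heq at 2; ring).
      assert (HB1 : sqrt (beta^2 - s1^2) <= beta - s1^2/(2*beta)).
      { apply sqrt_le_of.
        - assert (s1^2/(2*beta) <= 1/2).
          { apply (Rmult_le_reg_r (2*beta)); [lra|]. field_simplify; lra. }
          lra.
        - assert (E : (beta - s1^2/(2*beta))*(beta - s1^2/(2*beta)) = beta^2 - s1^2 + (s1^2/(2*beta))*(s1^2/(2*beta))) by (field; lra).
          rewrite E. nra. }
      assert (K := D1 x a beta t0 s1 Hx Ha ltac:(lra) Haa' ltac:(nra)
                 Heq' Ht0 ltac:(lra)).
      unfold T in LT |- *. lra.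
    + rewrite S_INR in *. assert (Hk2 := pos_INR k).
      set (n := INR k + 1 + 1) in *.
      assert (Hn : 2 <= n) by (unfold n; lra).
      assert (HB1 : sqrt (beta^2 - s1^2) <= 1 + (x^2 - s1^2)/2).
      { apply sqrt_le_of.
        - assert (0 <= x^2) by nra. lra.
        - assert (0 <= (x^2 - s1^2)*(x^2 - s1^2)) by apply Rle_0_sqr.
          assert (beta^2 = 1 + x^2) by nra. nra. }
      assert (K := D2 n x a (t0 - INR k - 1) Hn Hx Ha Haa' ltac:(rewrite <- Heq at 2; unfold n; ring)
                 ltac:(unfold n; lra) ltac:(unfold n; lra)).
      assert (Q2 : s1 - (2*n+1)*s1^2/2 <= 1/(2*(2*n+1))).
      { assert (0 <= ((2*n+1)*s1 - 1)*((2*n+1)*s1 - 1)) by apply Rle_0_sqr.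
        apply (Rmult_le_reg_r (2*(2*n+1))); [lra|]. field_simplify; [|lra]. nra. }
      assert (LT2 : lfun T beta <= (n+1)*(1 - s1^2/2) + n*(1 + (x^2 - s1^2)/2) + s1 - T - sqrt 2).
      { rewrite LT. replace (INR k + 1 + 2) with (n+1) by (unfold n; ring).
        assert (0 <= n+1) by lra. assert (0 <= n) by lra. nra. }
      unfold T in LT2 |- *. rewrite S_INR in LT2 |- *.
      replace (2 * (INR k + 1) + 2) with (2*n) in LT2 |- * by (unfold n; ring).
      assert (E : (n+1)*(1 - s1^2/2) + n*(1 + (x^2 - s1^2)/2) + s1 - 2*n = 1 + n*x^2/2 + (s1 - (2*n+1)*s1^2/2)) by field.
      assert (E2 : n * a + (t0 - INR k - 1) * 1 + x - t0 = n*(a-1) + x + 1) by (unfold n; ring).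
      lra.
  -
    destruct (pq_2 k0 t0 (conj C2 Hlt)) as [Q0 P0].
    assert (HP0 : 1 <= pfun t0) by lra. assert (HQ0 : 0 < qfun t0) by lra.
    assert (Lw := lfun_lower t0 beta s1 HP0 HQ0 ltac:(lra) ltac:(lra)).
    rewrite P0, Q0 in Lw. rewrite PT, QT in LT.
    assert (0 < (T - t0) * (1 - sqrt (1 - s1^2))) by (apply Rmult_lt_0_compat; lra).
    unfold T in *. nra.
Qed.
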